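(* Let $0\le p_1<1/2<p_2\le 1$, $p_1'=\tfrac12(p_1+\tfrac12)$, $p_2'=\tfrac12(p_2+\tfrac12)$, and let $\ell$ be a positive integer such that $\log_2(2\ell)$ is an integer, $\ell(1/2-p_1)\ge 2\log_2(2\ell)+1$ and $\ell(p_2-1/2)\ge 2\log_2(2\ell)+1$. Let $\mathbf{x}=\mathbf{x}_1\mathbf{x}_2\in\mathcal{W}(2\ell,\ell,[p_1'\ell,p_2'\ell])$ with $\mathbf{x}_1,\mathbf{x}_2\in\{0,1\}^\ell$. Let $a=\mathrm{Syn}(\mathbf{x}_1)\bmod 2\ell$, let $\mathbf{p}$ be the binary representation of $a$ of length $\log_2(2\ell)$, and let $\mathbf{y}=\mathbf{x}_1(\mathbf{p}\,||\,\overline{\mathbf{p}})\mathbf{x}_2$. Then $\mathbf{y}\in\mathcal{W}(2\ell+2\log_2(2\ell),\ell,[p_1\ell,p_2\ell])$, i.e. every window of size $\ell$ of $\mathbf{y}$ has weight in $[p_1\ell,p_2\ell]$.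
   Context: $\mathrm{wt}(\mathbf{x})$ denotes the number of ones of a binary sequence; $\overline{\mathbf{p}}$ is the bitwise complement; juxtaposition denotes concatenation. For $\mathbf{y}=y_1\dots y_m$, $\mathbf{w}=w_1\dots w_m$, the interleaving is $\mathbf{y}\,||\,\mathbf{w}=y_1w_1\dots y_mw_m$. The VT syndrome of $\mathbf{x}=x_1\dots x_n$ is $\mathrm{Syn}(\mathbf{x})=\sum_{i=1}^n i\,x_i$. For reals $a\le b$ and $\ell\le n$, $\mathcal{W}(n,\ell,[a,b])$ is the set of $\mathbf{x}\in\{0,1\}^n$ all of whose windows $x_i\dots x_{i+\ell-1}$ ($1\le i\le n-\ell+1$) have weight in $[a,b]$. *)

(* Defs.v *)
From mathcomp Require Import all_boot all_order all_algebra.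
Set Implicit Arguments. Unset Strict Implicit. Unset Printing Implicit Defensive.
Import Order.TTheory GRing.Theory Num.Theory.

(* Binary sequences are [seq bool]; positions are 1-indexed in the paper,
   0-indexed here (window i below is the paper's window starting at i+1). *)

Definition wt (x : seq bool) : nat := count id x.

Definition bcompl (x : seq bool) : seq bool := map negb x.

Definition interleave (y w : seq bool) : seq bool :=
  flatten [seq [:: yw.1; yw.2] | yw <- zip y w].

Definition Syn (x : seq bool) : nat :=
  \sum_(i < size x) (i.+1 * nth false x i)%N.

(* binary representation of a with exactly m bits, most significant bit first *)
Definition binrep (m a : nat) : seq bool :=
  [seq odd (a %/ 2 ^ (m - 1 - i)) | i <- iota 0 m].

Definition window (x : seq bool) (i l : nat) : seq bool := take l (drop i x).

Definition inW {R : realFieldType} (n l : nat) (a b : R) (x : seq bool) : Prop :=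
  size x = n /\
  forall i : nat, (i + l <= n)%N ->
    ((a <= (wt (window x i l))%:R) && ((wt (window x i l))%:R <= b))%R.

(* Main.v *)
Set Warnings "-notation-overridden,-ambiguous-paths".
Require Import Defs.
From mathcomp Require Import all_boot all_order all_algebra zify.
Import Order.TTheory GRing.Theory Num.Theory.

Definition Sq (s : seq bool) (a b : nat) : nat := \sum_(a <= k < b) nth false s k.

Lemma count_Sq s : count id s = Sq s 0 (size s).
Proof.
rewrite /Sq; elim: s => [|x s IH]; first by rewrite big_geq.
by rewrite /= big_nat_recl // IH.
Qed.

Lemma wt_window s i l : (i + l <= size s)%N -> wt (window s i l) = Sq s i (i + l).
Proof.
move=> H; rewrite /wt count_Sq /window size_take size_drop.
have -> : (if l < size s - i then l else size s - i) = l by case: ifP; lia.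
rewrite /Sq -{2}(add0n i) big_addn addKn; apply: eq_big_nat => k Hk.
by rewrite nth_take ?nth_drop 1?addnC //; lia.
Qed.

Lemma Sq_split s a b c : (a <= b <= c)%N -> Sq s a c = Sq s a b + Sq s b c.
Proof. by move=> /andP[h1 h2]; rewrite /Sq (@big_cat_nat _ _ _ b). Qed.

Lemma Sq_le s a b : (Sq s a b <= b - a)%N.
Proof.
rewrite /Sq -[X in (_ <= X)%N]muln1 -sum_nat_const_nat; apply: leq_sum => k _; by case: nth.
Qed.

Lemma interleave_cons a p : interleave (a :: p) (bcompl (a :: p)) = a :: ~~ a :: interleave p (bcompl p).
Proof. by []. Qed.

Lemma size_inter p : size (interleave p (bcompl p)) = (2 * size p)%N.
Proof. elim: p => [|a p IH] //; rewrite interleave_cons /= IH; lia. Qed.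

Lemma Sq_cons a s n : Sq (a :: s) 0 n.+1 = (a + Sq s 0 n)%N.
Proof.
rewrite /Sq big_nat_recl //; congr (_ + _)%N.
Qed.

Lemma Sq0 s : Sq s 0 0 = 0.
Proof. by rewrite /Sq big_geq. Qed.

Lemma g_bounds p d : (d <= 2 * size p)%N ->
  (d <= 2 * Sq (interleave p (bcompl p)) 0 d + 1)%N && (2 * Sq (interleave p (bcompl p)) 0 d <= d + 1)%N.
Proof.
elim: p d => [|a p IH] d.
  move=> /= Hd; have -> : d = 0 by lia.
  by rewrite Sq0.
case: d => [|[|d]] /= Hd; rewrite interleave_cons ?Sq0 //.
  by rewrite Sq_cons Sq0; case: a.
rewrite !Sq_cons; have := IH d ltac:(lia); case: a => /=; lia.
Qed.

Lemma Sq_shift s s' a b k : (forall j, (a <= j < b)%N -> nth false s (j + k) = nth false s' j) ->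
  Sq s (a + k) (b + k) = Sq s' a b.
Proof.
move=> H; rewrite /Sq big_addn addnK; apply: eq_big_nat => j Hj; by rewrite H.
Qed.

Lemma Sq_nil s a b : (b <= a)%N -> Sq s a b = 0.
Proof. by move=> h; rewrite /Sq big_geq. Qed.

Lemma decomp (x1 u x2 : seq bool) l m i :
  size x1 = l -> size u = (2 * m)%N -> size x2 = l -> (i + l <= 2 * l + 2 * m)%N ->
  Sq (x1 ++ u ++ x2) i (i + l) =
  (Sq (x1 ++ x2) (minn i l) l + Sq u (maxn i l - l) (minn (i + l) (l + 2 * m) - l)
   + Sq (x1 ++ x2) l (maxn (i + l) (l + 2 * m) - 2 * m))%N.
Proof.
move=> s1 su s2 Hi.
rewrite (Sq_split _ i (maxn i l) (i + l)); last by apply/andP; split; lia.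
rewrite (Sq_split _ (maxn i l) (minn (i + l) (l + 2 * m)) (i + l)); last by apply/andP; split; lia.
rewrite addnA; congr (_ + _ + _)%N.
- case: (leqP i l) => hil.
    rewrite /Sq; apply: eq_big_nat => j Hj.
    have hj : (j < l)%N by lia.
    by rewrite !nth_cat s1 hj.
  by rewrite !Sq_nil.
- rewrite -[in LHS](subnK (_ : l <= maxn i l)%N); last by lia.
  rewrite -[in X in Sq _ _ X](subnK (_ : l <= minn (i + l) (l + 2 * m))%N); last by lia.
  apply: Sq_shift => j Hj; rewrite nth_cat s1 ifN; last by lia.
  by rewrite addnK nth_cat su ifT //; lia.
- case: (leqP (l + 2 * m) (i + l)) => hil.
    rewrite [in LHS](_ : (i + l) = (i + l - 2 * m) + 2 * m)%N; last by lia.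
    apply: Sq_shift => j Hj.
    have h1 : (j + 2 * m < l)%N = false by lia.
    have h2 : (j < l)%N = false by lia.
    rewrite !nth_cat s1 h1 h2 su.
    have h3 : (j + 2 * m - l < 2 * m)%N = false by lia.
    rewrite h3; congr nth; lia.
  by rewrite !Sq_nil //; lia.
Qed.

Lemma key (x1 u x2 : seq bool) l m i :
  size x1 = l -> size u = (2 * m)%N -> size x2 = l -> (i + l <= 2 * l + 2 * m)%N ->
  (forall d, (d <= 2 * m)%N -> (d <= 2 * Sq u 0 d + 1)%N && (2 * Sq u 0 d <= d + 1)%N) ->
  exists j, [/\ (j + l <= 2 * l)%N,
    (2 * Sq (x1 ++ x2) j (j + l) <= 2 * Sq (x1 ++ u ++ x2) i (i + l) + 2 * m + 1)%N &
    (2 * Sq (x1 ++ u ++ x2) i (i + l) <= 2 * Sq (x1 ++ x2) j (j + l) + 2 * m)%N].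
Proof.
move=> s1 su s2 Hi Hg.
rewrite (decomp _ _ _ _ m) //.
set ql := minn i l; set c := (maxn i l - l)%N; set d := (minn (i + l) (l + 2 * m) - l)%N.
set b := (maxn (i + l) (l + 2 * m) - 2 * m)%N.
have hb1 : (l <= b <= 2 * l)%N by rewrite /b; apply/andP; split; lia.
have hlen : ((l - ql) + (d - c) + (b - l) = l)%N by rewrite /ql /c /d /b; lia.
have hcd : (c <= d <= 2 * m)%N by rewrite /c /d; apply/andP; split; lia.
have hq : (ql <= l)%N by rewrite /ql; lia.
clearbody ql c d b.
exists (b - l)%N; rewrite (_ : (b - l + l = b)%N); last by lia.
rewrite (Sq_split _ (b - l) ql b); last by apply/andP; split; lia.
rewrite (Sq_split _ ql l b); last by apply/andP; split; lia.
have hE := Sq_le (x1 ++ x2) (b - l) ql.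
have hS : Sq u 0 d = (Sq u 0 c + Sq u c d)%N by apply: Sq_split; apply/andP; split; lia.
have := Hg c ltac:(lia); have := Hg d ltac:(lia).
move: hE hS; set E := Sq _ (b - l) ql; set A := Sq _ ql l; set B := Sq _ l b.
set gc := Sq u 0 c; set gd := Sq u 0 d; set S := Sq u c d.
move=> hE hS /andP[Bd1 Bd2] /andP[Bc1 Bc2].
split; lia.
Qed.

From mathcomp Require Import lra.
Local Open Scope ring_scope.

Theorem corollary3 (R : realFieldType) (p1 p2 : R) (l m : nat)
    (x1 x2 : seq bool) :
  0 <= p1 -> p1 < 1 / 2 -> 1 / 2 < p2 -> p2 <= 1 ->
  (0 < l)%N ->
  (2 * l = 2 ^ m)%N ->
  (2 * m + 1)%:R <= l%:R * (1 / 2 - p1) ->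
  (2 * m + 1)%:R <= l%:R * (p2 - 1 / 2) ->
  size x1 = l -> size x2 = l ->
  inW (2 * l) l ((p1 + 1 / 2) / 2 * l%:R) ((p2 + 1 / 2) / 2 * l%:R) (x1 ++ x2) ->
  let a := (Syn x1 %% (2 * l))%N in
  let p := binrep m a in
  let y := x1 ++ interleave p (bcompl p) ++ x2 in
  inW (2 * l + 2 * m) l (p1 * l%:R) (p2 * l%:R) y.
Proof.
move=> hp1 hp1' hp2 hp2' l0 hlm h1 h2 s1 s2 [sx Hx] a p y.
have sp : size p = m by rewrite /p /binrep size_map size_iota.
rewrite /y; clear y; clearbody p; clear hlm a.
have su : size (interleave p (bcompl p)) = (2 * m)%N by rewrite size_inter sp.
split; first by rewrite !size_cat su s1 s2; lia.
move=> i Hi.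
have Hg : forall d, (d <= 2 * m)%N -> (d <= 2 * Sq (interleave p (bcompl p)) 0 d + 1)%N &&
    (2 * Sq (interleave p (bcompl p)) 0 d <= d + 1)%N.
  by move=> d hd; apply: g_bounds; rewrite sp.
have [j [Hj K1 K2]] := key _ _ _ _ _ _ s1 su s2 Hi Hg.
have := Hx j Hj; rewrite !wt_window ?sx // ?size_cat ?su ?s1 ?s2; last first.
  by lia.
move: K1 K2; set T := Sq _ i (i + l); set W := Sq _ j (j + l).
rewrite -!(ler_nat R) ?natrD ?natrM => K1 K2 /andP[W1 W2].
move: h1 h2; rewrite ?natrD ?natrM => h1 h2.
apply/andP; split; nra.
Qed.
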